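(* Let $n\ge2$. For $0\le p,q\le n$ let $d^n_{p,q}$ be the number of tuples $(i_1,\dots,i_p,j_1,\dots,j_q)$ with $1\le i_1<\dots<i_p\le n$, $1\le j_1<\dots<j_q\le n$ and $\sum_{r=1}^p i_r=\sum_{s=1}^q j_s$ (empty sums equal $0$; thus $d^n_{0,0}=1$, $d^n_{1,0}=d^n_{0,1}=0$), and for $0\le k\le 2n$ let $D^n_k=\sum_{p+q=k}d^n_{p,q}$. Then: (i) $d^n_{1,1}=d^n_{n-1,n-1}=n$ and $d^n_{k,k}\equiv\binom nk\pmod 2$; (ii) if $n$ is even then $d^n_{1,2}=\frac{n(n-2)}4$, and if $n$ is odd then $d^n_{1,2}=\left(\frac{n-1}2\right)^2$; (iii) $D^n_k=D^n_{2n-k}$ for $k=0,\dots,n$, and $D^n_0=1$, $D^n_1=0$, $D^n_2=n$; (iv) if $k$ is odd then $D^n_k$ is even; (v) $D^n_{2k}\equiv\binom nk\pmod 2$. *)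

(* Defs.v *)
From mathcomp Require Import all_boot.
Set Implicit Arguments.
Unset Strict Implicit.
Unset Printing Implicit Defensive.

(* An increasing tuple 1 <= i_1 < ... < i_p <= n is encoded as a subset
   I of 'I_n (element i : 'I_n stands for the integer i+1) with #|I| = p. *)
Definition setsum n (I : {set 'I_n}) : nat := \sum_(i in I) i.+1.

Definition dnum (n p q : nat) : nat :=
  #|[set IJ : {set 'I_n} * {set 'I_n} |
      [&& #|IJ.1| == p, #|IJ.2| == q & setsum IJ.1 == setsum IJ.2]]|.

Definition Dnum (n k : nat) : nat := \sum_(p < k.+1) dnum n p (k - p).

(* Main.v *)
Require Import Defs.
From mathcomp Require Import all_boot zify.

Lemma inv_parity (T : finType) (f : T -> T) (A : {set T}) :
  involutive f -> (forall x, x \in A -> f x \in A) ->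
  odd #|A| = odd #|[set x in A | f x == x]|.
Proof.
move=> finv fA.
pose P := [set x | f x == x].
pose Q := [set x | (enum_rank x < enum_rank (f x))%N].
have -> : [set x in A | f x == x] = A :&: P by apply/setP=> x; rewrite !inE.
rewrite -(cardsID P A) -(cardsID Q (A :\: P)).
have E : (A :\: P) :\: Q = f @: ((A :\: P) :&: Q).
  apply/setP=> y; rewrite !inE; apply/idP/imsetP.
  - case/andP=> hQ /andP[hP hA]; exists (f y); last by rewrite finv.
    rewrite !inE finv fA // (eq_sym y) hP /=. idtac.
    move: hQ; rewrite -leqNgt ltn_neqAle => ->; rewrite andbT.
    apply: contra hP => /eqP h; apply/eqP/enum_rank_inj; exact: val_inj.
  - case=> x; rewrite !inE => /andP[/andP[hP hA] hQ] ->.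
    rewrite finv fA // -leqNgt ltnW //= andbT.
    by rewrite eq_sym.
rewrite E card_imset; last exact: inv_inj.
rewrite oddD addnn odd_double addbF //.
Qed.

Lemma card_sum (T : finType) (P : pred T) : #|[set x | P x]| = \sum_x P x.
Proof.
rewrite -sum1_card big_mkcond /=; apply: eq_bigr => x _; rewrite inE; by case: (P x).
Qed.

Definition Sk n k := [set IJ : {set 'I_n} * {set 'I_n} |
   (#|IJ.1| + #|IJ.2| == k) && (setsum IJ.1 == setsum IJ.2)].

Lemma Dnum_card n k : Dnum n k = #|Sk n k|.
Proof.
rewrite /Dnum /dnum /Sk.
rewrite (eq_bigr (fun p : 'I_k.+1 => \sum_(IJ : {set 'I_n} * {set 'I_n})
   [&& #|IJ.1| == p, #|IJ.2| == k - p & setsum IJ.1 == setsum IJ.2] : nat)); last first.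
  by move=> p _; rewrite card_sum.
rewrite card_sum.
rewrite exchange_big /=; apply: eq_bigr => IJ _.
rewrite (eq_bigr (fun p : 'I_k.+1 => if (p == #|IJ.1| :> nat) then
   ((#|IJ.2| == k - #|IJ.1|) && (setsum IJ.1 == setsum IJ.2) : nat) else 0)); last first.
  move=> p _; case: eqP => [->|h]; first by rewrite eqxx.
  by rewrite ifN //; apply/eqP => e; apply: h; rewrite e.
rewrite -big_mkcond (big_ord1_eq _ (fun=> _)) ltnS.
case: (leqP #|IJ.1| k) => h.
  have -> : (#|IJ.2| == k - #|IJ.1|) = (#|IJ.1| + #|IJ.2| == k).
    apply/eqP/eqP; lia.
  by case: (_ && _).
suff -> : (#|IJ.1| + #|IJ.2| == k) = false by [].
apply/eqP; lia.
Qed.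

Definition swap n (IJ : {set 'I_n} * {set 'I_n}) := (IJ.2, IJ.1).

Arguments swap {n}.
Lemma swap_inv n : involutive (@swap n).
Proof. by case. Qed.

Lemma swap_parity n (A : {set {set 'I_n} * {set 'I_n}}) m :
  (forall x, x \in A -> swap x \in A) ->
  (forall I, ((I, I) \in A) = (#|I| == m)) ->
  odd #|A| = odd 'C(n, m).
Proof.
move=> sA fA; rewrite (@inv_parity _ _ _ (@swap_inv n) sA).
have -> : [set x in A | swap x == x] = (fun I => (I, I)) @: [set I : {set 'I_n} | #|I| == m].
  apply/setP => -[I J]; rewrite !inE /swap /=; apply/idP/imsetP.
  - case/andP => h /eqP [eJ _]; subst J; exists I => //; by rewrite inE -fA.
  - by case=> K; rewrite inE => hK [-> ->]; rewrite fA hK eqxx.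
rewrite card_imset; last by move=> I1 I2 [].
by rewrite card_draws card_ord.
Qed.
Set Implicit Arguments.

Lemma inv_card (T : finType) (f : T -> T) (A B : {set T}) :
  involutive f -> (forall x, x \in A -> f x \in B) ->
  (forall x, x \in B -> f x \in A) -> #|A| = #|B|.
Proof.
move=> finv fAB fBA.
have -> : B = f @: A.
  apply/setP => y; apply/idP/imsetP.
  - by move=> yB; exists (f y); rewrite ?finv ?fBA.
  - by case=> x xA ->; apply: fAB.
by rewrite card_imset //; apply: inv_inj.
Qed.

Arguments setsum {n}.
Lemma setsumC n (I : {set 'I_n}) : setsum I + setsum (~: I) = setsum [set: 'I_n].
Proof. by rewrite /setsum [RHS](big_setID I) /= setTI setTD. Qed.

Lemma setsum1 n (i : 'I_n) : setsum [set i] = i.+1.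
Proof. by rewrite /setsum big_set1. Qed.

Lemma setsum0 n (I : {set 'I_n}) : setsum I = 0 -> I = set0.
Proof.
case: (set_0Vmem I) => [//|[i iI]].
by rewrite /setsum (bigD1 i) //=.
Qed.

Lemma setsum_eq0 n (I J : {set 'I_n}) : setsum I = setsum J ->
  (#|I| == 0) = (#|J| == 0).
Proof.
move=> e; rewrite !cards_eq0; apply/eqP/eqP => h.
  by apply: setsum0; rewrite -e h /setsum big_set0.
by apply: setsum0; rewrite e h /setsum big_set0.
Qed.

Definition comp n (IJ : {set 'I_n} * {set 'I_n}) := (~: IJ.1, ~: IJ.2).
Arguments comp {n}.
Lemma comp_inv n : involutive (@comp n).
Proof. by case=> I J; rewrite /comp /= !setCK. Qed.

Lemma comp_sum n (I J : {set 'I_n}) :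
  (setsum (~: I) == setsum (~: J)) = (setsum I == setsum J).
Proof.
have := setsumC I; have := setsumC J => h1 h2.
apply/eqP/eqP; lia.
Qed.

Lemma cardC' n (I : {set 'I_n}) : #|~: I| = n - #|I|.
Proof. have := cardsC I; rewrite card_ord; lia. Qed.

Lemma card_le n (I : {set 'I_n}) : #|I| <= n.
Proof. have := max_card (mem I); by rewrite card_ord. Qed.

Lemma Sk_sym n k : k <= 2 * n -> #|Sk n k| = #|Sk n (2 * n - k)|.
Proof.
move=> hk; apply: (@inv_card _ _ _ _ (@comp_inv n)) => -[I J];
  rewrite /Sk !inE /comp /= comp_sum !cardC' => /andP[/eqP h ->];
  rewrite andbT; have := card_le I; have := card_le J => h1 h2; apply/eqP;
  set a := #|I| in h h1 h2 *; set b := #|J| in h h1 h2 *; lia.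
Qed.

Lemma dnum_sym n : 0 < n -> dnum n n.-1 n.-1 = dnum n 1 1.
Proof.
move=> hn; rewrite -subn1.
apply: (@inv_card _ _ _ _ (@comp_inv n)) => -[I J];
  rewrite !inE /comp /= comp_sum !cardC' => /and3P[/eqP h1 /eqP h2 ->];
  rewrite andbT; have := card_le I; have := card_le J => h3 h4; apply/andP; split; apply/eqP;
  set a := #|I| in h1 h2 h3 h4 *; set b := #|J| in h1 h2 h3 h4 *; lia.
Qed.
Set Implicit Arguments.

Lemma nat1 (a b : nat) : ((a == 0) = (b == 0)) -> (a + b == 1) = false.
Proof. by case: a b => [|[|a]] [|[|b]]. Qed.
Lemma nat2 (a b : nat) : ((a == 0) = (b == 0)) -> (a + b == 2) = (a == 1) && (b == 1).
Proof. case: a b => [|[|a]] [|[|b]] //=; by rewrite ?addnS ?addSn. Qed.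

Lemma dnum11 n : dnum n 1 1 = n.
Proof.
rewrite /dnum.
have -> : [set IJ : {set 'I_n} * {set 'I_n} |
      [&& #|IJ.1| == 1, #|IJ.2| == 1 & setsum IJ.1 == setsum IJ.2]]
   = (fun i => ([set i], [set i])) @: [set: 'I_n].
  apply/setP => -[I J]; rewrite !inE /=; apply/idP/imsetP.
  - case/and3P => /cards1P [i ->] /cards1P [j ->]; rewrite !setsum1 => /eqP [e].
    exists i; first by rewrite inE.
    by have -> : j = i by apply: val_inj.
  - by case=> i _ [-> ->]; rewrite cards1 !eqxx.
rewrite card_imset; first by rewrite cardsT card_ord.
by move=> i j [/set1_inj].
Qed.

Lemma Dnum0 n : Dnum n 0 = 1.
Proof.
rewrite Dnum_card -(cards1 (set0 : {set 'I_n}, set0 : {set 'I_n})).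
apply: eq_card => -[I J]; rewrite !inE /= xpair_eqE addn_eq0 !cards_eq0.
apply/idP/idP.
- by case/andP => /andP[-> ->].
- by case/andP => /eqP-> /eqP->; rewrite !eqxx.
Qed.

Lemma Dnum1 n : Dnum n 1 = 0.
Proof.
rewrite Dnum_card; apply/eqP; rewrite cards_eq0; apply/eqP/setP => -[I J].
rewrite !inE /=; case e: (setsum I == setsum J); last by rewrite andbF.
by rewrite andbT nat1 // (setsum_eq0 (eqP e)).
Qed.

Lemma Dnum2 n : Dnum n 2 = n.
Proof.
rewrite Dnum_card -[RHS](dnum11 n) /dnum.
apply: eq_card => -[I J].
rewrite !inE /=; case e: (setsum I == setsum J); last by rewrite !andbF.
by rewrite !andbT nat2 // (setsum_eq0 (eqP e)).
Qed.
Set Implicit Arguments.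

Definition Tn n := \sum_(a < n) (n - (2 * a + 2)).

Lemma Tn_rec n : Tn n.+2 = Tn n + n.
Proof.
rewrite /Tn big_ord_recl /= big_ord_recr /=.
have -> : \sum_(i < n) (n.+2 - (2 * (bump 0 (widen_ord (leqnSn n) i)) + 2))
        = \sum_(i < n) (n - (2 * i + 2)).
  by apply: eq_bigr => i _; rewrite /bump /=; lia.
rewrite /bump /=; lia.
Qed.

Lemma Tn_even m : Tn (2 * m) = m * (m - 1).
Proof.
elim: m => [|m IH]; first by rewrite /Tn big_ord0.
have -> : 2 * m.+1 = (2 * m).+2 by lia.
rewrite Tn_rec IH; nia.
Qed.

Lemma Tn_odd m : Tn (2 * m).+1 = m * m.
Proof.
elim: m => [|m IH]; first by rewrite /Tn big_ord_recr big_ord0.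
have -> : (2 * m.+1).+1 = (2 * m).+1.+2 by lia.
rewrite Tn_rec IH; nia.
Qed.

Lemma sum_le n m : \sum_(b < n) (b <= m) = minn n m.+1.
Proof.
elim: n => [|n IH]; first by rewrite big_ord0.
rewrite big_ord_recr /= IH; lia.
Qed.

Lemma inner n (a : nat) : a < n ->
  \sum_(b < n) ((a < b) && (a + b + 2 <= n)) = n - (2 * a + 2).
Proof.
move=> an.
have H : \sum_(b < n) ((a < b) && (a + b + 2 <= n)) + \sum_(b < n) (b <= minn a (n - (a + 2)))
   = \sum_(b < n) (b <= n - (a + 2)).
  rewrite -big_split /=; apply: eq_bigr => b _; lia.
move: H; rewrite !sum_le; lia.
Qed.

Definition Pn n := [set ab : 'I_n * 'I_n | (ab.1 < ab.2) && (ab.1 + ab.2 + 2 <= n)].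

Lemma cardPn n : #|Pn n| = Tn n.
Proof.
rewrite /Pn card_sum -(pair_bigA _ (fun a b : 'I_n => ((a < b) && (a + b + 2 <= n) : nat))) /=.
apply: eq_bigr => a _; exact: inner.
Qed.

Lemma in2 n (x c d : 'I_n) : x \in [set c; d] -> (x : nat) = c \/ (x : nat) = d.
Proof. by rewrite in_set2 => /orP[/eqP->|/eqP->]; [left|right]. Qed.

Lemma set2_inj n (a b c d : 'I_n) : a < b -> c < d -> [set a; b] = [set c; d] -> a = c /\ b = d.
Proof.
move=> ab cd E.
have /in2 ha : a \in [set c; d] by rewrite -E set21.
have /in2 hb : b \in [set c; d] by rewrite -E set22.
have /in2 hc : c \in [set a; b] by rewrite E set21.
have /in2 hd : d \in [set a; b] by rewrite E set22.
suff [h1 h2] : (a : nat) = c /\ (b : nat) = d by split; apply: val_inj.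
lia.
Qed.

Lemma setsum2 n (x y : 'I_n) : x != y -> setsum [set x; y] = x.+1 + y.+1.
Proof.
move=> xy; rewrite /setsum big_setU1 /= ?big_set1 //.
by rewrite inE.
Qed.

Definition phi n (ab : 'I_n * 'I_n) : {set 'I_n} * {set 'I_n} :=
  ([set insubd ab.1 (ab.1 + ab.2 + 1)], [set ab.1; ab.2]).

Lemma dnum12 n : dnum n 1 2 = Tn n.
Proof.
rewrite -cardPn /dnum.
have -> : [set IJ : {set 'I_n} * {set 'I_n} |
      [&& #|IJ.1| == 1, #|IJ.2| == 2 & setsum IJ.1 == setsum IJ.2]]
   = (@phi n) @: Pn n.
  apply/setP => -[I J]; rewrite !inE /=; apply/idP/imsetP.
  - case/and3P => /cards1P [i ->] /cards2P [x [y [xy ->]]].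
    rewrite setsum1 setsum2 // => /eqP e.
    have iln := ltn_ord i.
    case: (ltngtP x y) => hxy.
    + exists (x, y); first by rewrite inE /=; apply/andP; split => //; lia.
      rewrite /phi /=; congr (_, _); congr [set _]; apply: val_inj; rewrite insubdK /=; [lia | rewrite unfold_in /=; lia].
    + exists (y, x); first by rewrite inE /=; apply/andP; split => //; lia.
      rewrite /phi /= setUC; congr (_, _); congr [set _]; apply: val_inj; rewrite insubdK /=; [lia | rewrite unfold_in /=; lia].
    + by move: xy; rewrite (val_inj hxy) eqxx.
  - case=> -[a b]; rewrite inE /= /phi /= => /andP[ab hn] [-> ->].
    have anb : a != b by rewrite neq_ltn ab.
    rewrite cards1 cards2 anb setsum1 setsum2 //= insubdK; last by rewrite unfold_in /=; lia.
    apply/eqP; lia.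
rewrite card_in_imset // => -[a b] [c d]; rewrite !inE /= => /andP[ab _] /andP[cd _].
rewrite /phi /= => -[_ E].
by case: (set2_inj ab cd E) => -> ->.
Qed.
Set Implicit Arguments.

Lemma Sk_swap n k x : x \in Sk n k -> swap x \in Sk n k.
Proof. by case: x => I J; rewrite !inE /swap /= => /andP[/eqP <- /eqP ->]; rewrite addnC !eqxx. Qed.

Unset Implicit Arguments.
Theorem lemma4p13 (n : nat) (hn : 2 <= n) :
  (* (i) *)
  [/\ dnum n 1 1 = n, dnum n n.-1 n.-1 = n &
      forall k, k <= n -> dnum n k k = 'C(n, k) %[mod 2]] /\
  (* (ii) *)
  (~~ odd n -> dnum n 1 2 = (n * (n - 2)) %/ 4) /\
  (odd n -> dnum n 1 2 = ((n - 1) %/ 2) ^ 2) /\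
  (* (iii) *)
  [/\ forall k, k <= n -> Dnum n k = Dnum n (2 * n - k),
      Dnum n 0 = 1, Dnum n 1 = 0 & Dnum n 2 = n] /\
  (* (iv) *)
  (forall k, k <= 2 * n -> odd k -> ~~ odd (Dnum n k)) /\
  (* (v) *)
  (forall k, k <= n -> Dnum n (2 * k) = 'C(n, k) %[mod 2]).
Proof.
split; [split|split; [|split; [|split; [split|split]]]].
- exact: dnum11.
- by rewrite dnum_sym ?dnum11 //; lia.
- move=> k _; rewrite !modn2 /dnum; congr (nat_of_bool _).
  apply: swap_parity.
    case=> I J; rewrite !inE /swap /= => /and3P[-> -> /eqP ->]. by rewrite eqxx.
  by move=> I; rewrite !inE /= eqxx andbT andbb.
- move=> ev; rewrite dnum12.
  have e : n = 2 * n./2.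
    by rewrite -{1}(odd_double_half n) (negbTE ev) add0n -muln2 mulnC.
  rewrite e Tn_even.
  have -> : 2 * n./2 * (2 * n./2 - 2) = n./2 * (n./2 - 1) * 4 by nia.
  by rewrite mulnK.
- move=> od; rewrite dnum12.
  have e : n = (2 * n./2).+1.
    by rewrite -{1}(odd_double_half n) od add1n -muln2 mulnC.
  rewrite e Tn_odd.
  have -> : (2 * n./2).+1 - 1 = n./2 * 2 by lia.
  by rewrite mulnK // expnS expn1.
- move=> k hk; rewrite !Dnum_card; apply: Sk_sym; lia.
- exact: Dnum0.
- exact: Dnum1.
- exact: Dnum2.
- move=> k _ ok; rewrite Dnum_card (@inv_parity _ _ _ (@swap_inv n) (@Sk_swap n k)).
  suff -> : [set x in Sk n k | swap x == x] = set0 by rewrite cards0.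
  apply/setP => -[I J]; rewrite !inE /swap /= xpair_eqE.
  apply/negbTE; apply/negP => /andP[/andP[/eqP h _] /andP[/eqP e _]].
  by move: ok; rewrite -h e addnn odd_double.
- move=> k _; rewrite !modn2 Dnum_card; congr (nat_of_bool _).
  apply: swap_parity; first exact: Sk_swap.
  move=> I; rewrite !inE /= eqxx andbT addnn -mul2n.
  apply/eqP/eqP; lia.
Qed.
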